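(* Let $PC_n^1$ be the polyomino chain with $n$ squares and exactly two segments $s_1,s_2$ with lengths $l_1=2$ and $l_2=n-1$. Then $ZC_1(PC_n^1)=32n-30-2I_{\{n=4\}}$ for $n\ge 4$, and $ZC_2(PC_n^1)=48n-58-I_{\{n=5\}}$ for $n\ge 5$.
   Context: A polyomino chain with $n$ squares is a sequence of $n$ unit squares in the plane in which consecutive squares share exactly one edge and the centers of consecutive squares form a path; it is regarded as the graph whose vertices are the corners of the squares and whose edges are the sides of the squares. A square is terminal if it has exactly one adjacent square, kink if it has two adjacent squares and contains a vertex of degree 2. A segment is a maximal linear (straight) subchain, including the kink and/or terminal squares at its ends; consecutive segments share a kink square, and the length of a segment is its number of squares. For a vertex $v$, $\tau_v$ is the number of vertices at distance exactly $2$ from $v$; $ZC_1(G)=\sum_{v\in V(G)}\tau_v^2$ and $ZC_2(G)=\sum_{uv\in E(G)}\tau_u\tau_v$. $I_{\{A\}}$ is the indicator of condition $A$. *)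

(* Defs.v *)
From mathcomp Require Import all_boot all_order all_algebra.
Set Implicit Arguments. Unset Strict Implicit. Unset Printing Implicit Defensive.
Import Order.TTheory GRing.Theory Num.Theory.

Definition point := (int * int)%type.

(* A unit square (cell) is identified by its lower-left corner (x,y);
   it is [x,x+1] x [y,y+1]. A polyomino is given by its list of cells. *)
Definition corners (c : point) : seq point :=
  [:: (c.1, c.2); (c.1 + 1, c.2)%R; (c.1, c.2 + 1)%R; (c.1 + 1, c.2 + 1)%R].

Definition pverts (cells : seq point) : seq point :=
  undup (flatten (map corners cells)).

Definition unit_apart (u v : point) : bool :=
  ((`|u.1 - v.1|%N + `|u.2 - v.2|%N) == 1)%N.

Definition padj (cells : seq point) (u v : point) : bool :=
  unit_apart u v && has (fun c => (u \in corners c) && (v \in corners c)) cells.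

Fixpoint reach (cells : seq point) (k : nat) (u v : point) : bool :=
  match k with
  | 0 => u == v
  | k'.+1 => reach cells k' u v ||
             has (fun w => padj cells u w && reach cells k' w v) (pverts cells)
  end.

Definition at_dist (cells : seq point) (k : nat) (u v : point) : bool :=
  reach cells k u v && (if k is k'.+1 then ~~ reach cells k' u v else true).

Definition tau (cells : seq point) (v : point) : nat :=
  count (fun u => at_dist cells 2 v u) (pverts cells).

Definition ZC1 (cells : seq point) : nat :=
  \sum_(v <- pverts cells) (tau cells v) ^ 2.

(* ZC_2(G) = sum over edges uv of tau_u * tau_v; each (unordered) edge is
   counted once, as the pair of its endpoints with indices i < j in the
   duplicate-free vertex list. *)
Definition ZC2 (cells : seq point) : nat :=
  let V := pverts cells in
  \sum_(i < size V) \sum_(j < size V | (i < j)%N && padj cells (nth (0,0)%R V i) (nth (0,0)%R V j))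
     tau cells (nth (0,0)%R V i) * tau cells (nth (0,0)%R V j).

(* PC_n^1 : the polyomino chain with n squares and exactly two segments,
   of lengths l1 = 2 and l2 = n - 1:
   square (1,0), kink square (0,0), then squares (0,1), ..., (0,n-2). *)
Definition PC1 (n : nat) : seq point :=
  (Posz 1, Posz 0) :: (Posz 0, Posz 0) :: [seq (Posz 0, Posz i.+1) | i <- iota 0 (n - 2)].

(* Main.v *)
Require Import Defs.
From mathcomp Require Import all_boot all_order all_algebra zify.
From Stdlib Require Import FunctionalExtensionality.
Import GRing.Theory Num.Theory.
Set Implicit Arguments. Unset Strict Implicit.
Local Open Scope ring_scope.
Definition padd (u v : point) : point := (u.1 + v.1, u.2 + v.2).
Definition p00 : point := (0,0).
Definition E4 : seq point := [:: (1,0); (-1,0); (0,1); (0,-1)].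
Definition D8 : seq point := [:: (2,0); (-2,0); (0,2); (0,-2); (1,1); (1,-1); (-1,1); (-1,-1)].
Definition owners (u : point) : seq point := [:: u; padd u (-1,0); padd u (0,-1); padd u (-1,-1)].
Definition padjR (T : point -> bool) (d e : point) : bool :=
  unit_apart d e && has (fun c => T c && (e \in corners c)) (owners d).
Definition tauR (T : point -> bool) : nat :=
  count (fun d => ~~ padjR T p00 d && has (fun e => padjR T p00 e && padjR T e d) E4) D8.
Definition gR (T : point -> bool) : nat :=
  (tauR T * \sum_(e <- E4 | padjR T p00 e) tauR (fun c => T (padd e c)))%N.
Definition restrict (R : int) (T : point -> bool) (c : point) : bool :=
  if (- R <= c.1 <= R) && (- R <= c.2 <= R) then T c else false.
Lemma tauR_restrict T : tauR T = tauR (restrict 4 T).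
Proof. vm_compute. reflexivity. Qed.
Lemma gR_restrict T : gR T = gR (restrict 4 T).
Proof. rewrite /gR unlock. vm_compute. reflexivity. Qed.

Lemma mem_corners u c : (u \in corners c) = (c \in owners u).
Proof.
case: u c => [a b] [x y]; rewrite /corners /owners /padd /= !inE !xpair_eqE.
apply/idP/idP => H; lia.
Qed.

Lemma padd_inj v : injective (padd v).
Proof.
case: v => a b [x y] [x' y']; rewrite /padd /= => /eqP; rewrite xpair_eqE => /andP[/eqP H1 /eqP H2].
by rewrite (addrI _ H1) (addrI _ H2).
Qed.

Lemma padd_corners v c : corners (padd v c) = map (padd v) (corners c).
Proof. by case: v c => a b [x y]; rewrite /corners /padd /= !addrA. Qed.

Lemma owners_padd v c : owners (padd v c) = map (padd v) (owners c).
Proof. by case: v c => a b [x y]; rewrite /owners /padd /= !addrA. Qed.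

Lemma mem_padd v x s : (padd v x \in map (padd v) s) = (x \in s).
Proof. exact: (mem_map (@padd_inj v)). Qed.

Lemma ua_padd v d e : unit_apart (padd v d) (padd v e) = unit_apart d e.
Proof.
case: v d e => a b [x y] [x' y']; rewrite /unit_apart /padd /=.
have H : forall p q r : int, (p + q) - (p + r) = q - r by move=> p q r; lia.
by rewrite !H.
Qed.

Lemma padd0 v : padd v p00 = v.
Proof. by case: v => a b; rewrite /padd /= !addr0. Qed.

Lemma paddA u d e : padd (padd u d) e = padd u (padd d e).
Proof. by case: u d e => a b [x y] [x' y']; rewrite /padd /= !addrA. Qed.

Lemma ua_E4 u w : unit_apart u w -> exists2 e, e \in E4 & w = padd u e.
Proof.
case: u w => a b [x y]; rewrite /unit_apart /= => H.
exists (x - a, y - b); last by rewrite /padd /=; congr pair; lia.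
rewrite /E4 !inE !xpair_eqE; lia.
Qed.

Lemma padj_rel cells v d e :
  padj cells (padd v d) (padd v e) = padjR (fun c => padd v c \in cells) d e.
Proof.
rewrite /padj /padjR ua_padd; congr andb.
apply/hasP/hasP.
- move=> [c cin /andP[H1 H2]]. rewrite mem_corners owners_padd in H1.
  case/mapP: H1 => c0 c0in E; subst c.
  exists c0 => //. by rewrite cin /= -(mem_padd v) -padd_corners.
- move=> [c0 c0in /andP[H1 H2]]. exists (padd v c0) => //.
  by rewrite mem_corners owners_padd mem_padd c0in /= padd_corners mem_padd.
Qed.

Lemma padj_rel0 cells v e :
  padj cells v (padd v e) = padjR (fun c => padd v c \in cells) p00 e.
Proof. by rewrite -padj_rel padd0. Qed.

Lemma padj_mem cells u w : padj cells u w -> w \in pverts cells.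
Proof.
rewrite /padj => /andP[_ /hasP[c cin /andP[_ H]]].
rewrite /pverts mem_undup. apply/flatten_mapP. by exists c.
Qed.

Lemma pverts_mem cells u : (u \in pverts cells) = has (fun c => c \in cells) (owners u).
Proof.
rewrite /pverts mem_undup; apply/flatten_mapP/hasP => [[c cin H]|[c cin H]]; exists c => //.
- by rewrite -mem_corners.
- by rewrite mem_corners.
Qed.

Lemma padj_sym cells u w : padj cells u w = padj cells w u.
Proof.
rewrite /padj /unit_apart; congr andb.
- by rewrite -(abszN (u.1 - w.1)) -(abszN (u.2 - w.2)) !opprB.
- by apply: eq_has => c; rewrite andbC.
Qed.

Lemma padj_irr cells u : padj cells u u = false.
Proof. by rewrite /padj /unit_apart !subrr. Qed.

Lemma has_eq1 (T : eqType) (P : pred T) (s : seq T) u :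
  has (fun w => P w && (w == u)) s = (u \in s) && P u.
Proof.
apply/hasP/andP => [[w win /andP[Pw /eqP E]]|[uin Pu]]; first by subst.
by exists u => //; rewrite Pu eqxx.
Qed.

Lemma reach1 cells a u : u \in pverts cells ->
  reach cells 1 a u = (a == u) || padj cells a u.
Proof. by move=> uV /=; rewrite has_eq1 uV. Qed.

Lemma hasV_nbr cells v (q : pred point) :
  has (fun w => padj cells v w && q w) (pverts cells) =
  has (fun e => padj cells v (padd v e) && q (padd v e)) E4.
Proof.
apply/hasP/hasP => [[w _ /andP[P Q]]|[e ein /andP[P Q]]].
- have /andP[ua _] := P. case: (ua_E4 ua) => e ein wE; subst w.
  by exists e => //; rewrite P Q.
- by exists (padd v e); [exact: padj_mem P | rewrite P Q].
Qed.

Lemma at_dist_char cells v u : u \in pverts cells ->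
  at_dist cells 2 v u = (v != u) && ~~ padj cells v u &&
     has (fun e => padj cells v (padd v e) && padj cells (padd v e) u) E4.
Proof.
move=> uV.
have E2 : reach cells 2 v u = reach cells 1 v u ||
   has (fun w => padj cells v w && reach cells 1 w u) (pverts cells) by [].
rewrite /at_dist E2.
rewrite (eq_has (a2 := predU (fun w => padj cells v w && (w == u))
                            (fun w => padj cells v w && padj cells w u))); last first.
  move=> w /=; rewrite -andb_orr; congr andb; exact: reach1.
rewrite has_predU has_eq1 uV reach1 //.
have -> := hasV_nbr cells v (fun w => padj cells w u).
by case: (v == u); case: (padj cells v u); case: has.
Qed.

Lemma count_uniq (T : eqType) (P : pred T) (s1 s2 : seq T) :
  uniq s1 -> uniq s2 -> (forall x, P x -> (x \in s1) = (x \in s2)) ->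
  count P s1 = count P s2.
Proof.
move=> u1 u2 H; rewrite -!size_filter; apply: perm_size; apply: uniq_perm;
  rewrite ?filter_uniq // => x; rewrite !mem_filter; case Px: (P x) => //=; exact: H.
Qed.

Lemma sum_uniq (T : eqType) (P : pred T) (F : T -> nat) (s1 s2 : seq T) :
  uniq s1 -> uniq s2 -> (forall x, P x -> (x \in s1) = (x \in s2)) ->
  (\sum_(x <- s1 | P x) F x = \sum_(x <- s2 | P x) F x)%N.
Proof.
move=> u1 u2 H; rewrite -big_filter -[RHS]big_filter; apply: perm_big; apply: uniq_perm;
  rewrite ?filter_uniq // => x; rewrite !mem_filter; case Px: (P x) => //=; exact: H.
Qed.

Lemma E4E4 e e' : e \in E4 -> e' \in E4 -> (padd e e' == p00) || (padd e e' \in D8).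
Proof.
move=> H1 H2.
have : all (fun e => all (fun e' => (padd e e' == p00) || (padd e e' \in D8)) E4) E4 by vm_compute.
by move/allP/(_ _ H1)/allP/(_ _ H2).
Qed.

Lemma tau_rel cells v : tau cells v = tauR (fun c => padd v c \in cells).
Proof.
rewrite /tau.
rewrite (eq_in_count (a2 := fun u => (v != u) && ~~ padj cells v u &&
   has (fun e => padj cells v (padd v e) && padj cells (padd v e) u) E4)); last first.
  by move=> u uV; exact: at_dist_char.
rewrite (@count_uniq _ _ _ (map (padd v) D8)); first last.
- move=> u /andP[/andP[nvu _] /hasP[e ein /andP[_ P2]]].
  rewrite (padj_mem P2). have /andP[ua _] := P2. case: (ua_E4 ua) => e' e'in E; subst u.
  rewrite paddA mem_padd. case/orP: (E4E4 ein e'in) => // /eqP E.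
  by move: nvu; rewrite paddA E padd0 eqxx.
- by rewrite map_inj_uniq //; exact: padd_inj.
- exact: undup_uniq.
rewrite count_map. apply: eq_in_count => d din /=.
have -> : (v != padd v d).
  apply/negP => /eqP E. have : padd v p00 = padd v d by rewrite padd0.
  by move/padd_inj => E'; move: din; rewrite -E'.
by rewrite !padj_rel0 !padj_rel.
Qed.

Lemma ZC2_sym cells : (2 * ZC2 cells = \sum_(u <- pverts cells)
   \sum_(w <- pverts cells | padj cells u w) tau cells u * tau cells w)%N.
Proof.
set V := pverts cells. set N := size V.
pose f i := nth (0,0) V i. pose t := tau cells.
have Z : ZC2 cells = (\sum_(0 <= i < N) \sum_(0 <= j < N | (i < j)%N && padj cells (f i) (f j))
     t (f i) * t (f j))%N.
  rewrite /ZC2 -/V -/N big_mkord; apply: eq_bigr => i _.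
  by rewrite big_mkord.
have R : (\sum_(u <- V) \sum_(w <- V | padj cells u w) tau cells u * tau cells w =
  \sum_(0 <= i < N) \sum_(0 <= j < N | padj cells (f i) (f j)) t (f i) * t (f j))%N.
  rewrite (big_nth (0,0)); apply: eq_bigr => i _; by rewrite (big_nth (0,0)).
rewrite R Z mul2n -addnn.
rewrite [in RHS](eq_bigr (fun i => \sum_(0 <= j < N | (i < j)%N && padj cells (f i) (f j)) t (f i) * t (f j)
   + \sum_(0 <= j < N | (j < i)%N && padj cells (f i) (f j)) t (f i) * t (f j))%N); last first.
  move=> i _; rewrite (bigID (fun j => (i < j)%N)) /=; congr addn.
  - by apply: eq_bigl => j; rewrite andbC.
  - apply: eq_bigl => j; case: (ltngtP i j) => [||->]; rewrite ?andbF ?andbT //.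
    by rewrite padj_irr.
rewrite big_split /=; congr addn.
rewrite (exchange_big_dep_nat predT) //=; apply: eq_bigr => i _.
by apply: eq_big => [j|j _]; [rewrite padj_sym | rewrite mulnC].
Qed.

Lemma ZC1_rel cells : ZC1 cells = (\sum_(u <- pverts cells) tauR (fun c => padd u c \in cells) ^ 2)%N.
Proof. by apply: eq_bigr => u _; rewrite tau_rel. Qed.

Lemma ZC2_rel cells : (2 * ZC2 cells = \sum_(u <- pverts cells) gR (fun c => padd u c \in cells))%N.
Proof.
rewrite ZC2_sym; apply: eq_bigr => u _.
rewrite -big_distrr /=.
rewrite (@sum_uniq _ _ _ _ (map (padd u) E4)); first last.
- move=> w P; rewrite (padj_mem P). have /andP[ua _] := P.
  by case: (ua_E4 ua) => e ein ->; rewrite mem_padd ein.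
- by rewrite map_inj_uniq //; exact: padd_inj.
- exact: undup_uniq.
rewrite big_map /gR tau_rel; congr muln; apply: eq_big => [e|e _]; first by rewrite padj_rel0.
rewrite tau_rel; congr tauR; apply: functional_extensionality => c; by rewrite paddA.
Qed.

Definition Tn n (v : point) := fun c => padd v c \in PC1 n.
Definition col (x : int) n : seq point := [seq (x, Posz j) | j <- iota 0 n].
Definition p20 : point := (2,0).
Definition p21 : point := (2,1).
Definition Vlist n : seq point := p20 :: p21 :: col 0 n ++ col 1 n.

Lemma mem_colV (x : int) (u : point) n :
  (u \in col x n) = (u.1 == x) && (0 <= u.2) && (u.2 < Posz n).
Proof.
case: u => a b /=; rewrite /col.
apply/mapP/idP => [[j jin [-> ->]]|]; first by rewrite mem_iota in jin; lia.
case: b => j H; last by lia.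
by exists j; [rewrite mem_iota; lia | congr pair; lia].
Qed.

Lemma mem_cellcol (a b : int) m :
  ((a,b) \in [seq (Posz 0, Posz i.+1) | i <- iota 0 m]) = (a == 0) && (1 <= b) && (b <= Posz m).
Proof.
apply/mapP/idP => [[j jin [-> ->]]|]; first by rewrite mem_iota in jin; lia.
case: b => j H; last by lia.
exists j.-1; [rewrite mem_iota; lia | congr pair; lia].
Qed.

Lemma mem_cells n (a b : int) : (2 <= n)%N ->
  ((a,b) \in PC1 n) = ((a == 1) && (b == 0)) || ((a == 0) && (0 <= b) && (b + 2 <= Posz n)).
Proof.
move=> n2; rewrite /PC1 !inE !xpair_eqE mem_cellcol.
apply/idP/idP; lia.
Qed.

Lemma pverts_PC1 n (u : point) : (2 <= n)%N -> (u \in pverts (PC1 n)) = (u \in Vlist n).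
Proof.
move=> n2; case: u => a b.
rewrite pverts_mem /owners /padd /= !mem_cells // /Vlist !inE mem_cat !mem_colV /p20 /p21 !xpair_eqE /=.
apply/idP/idP; lia.
Qed.

Lemma Vlist_uniq n : uniq (Vlist n).
Proof.
have inj x : injective (fun j : nat => (x, Posz j) : point) by move=> i j [].
rewrite /Vlist !cons_uniq !inE !mem_cat !mem_colV cat_uniq /p20 /p21 /=.
rewrite /col !map_inj_uniq ?iota_uniq //=.
have -> : has (mem (col 0 n)) (col 1 n) = false.
  apply/hasP => [[p]]; rewrite inE !mem_colV => H1 H2; lia.
by [].
Qed.

Lemma ZC1_V n : (2 <= n)%N -> ZC1 (PC1 n) = (\sum_(u <- Vlist n) tauR (Tn n u) ^ 2)%N.
Proof.
move=> n2; rewrite ZC1_rel; apply: perm_big; apply: uniq_perm.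
- exact: undup_uniq.
- exact: Vlist_uniq.
- by move=> u; rewrite pverts_PC1.
Qed.

Lemma ZC2_V n : (2 <= n)%N -> (2 * ZC2 (PC1 n) = \sum_(u <- Vlist n) gR (Tn n u))%N.
Proof.
move=> n2; rewrite ZC2_rel; apply: perm_big; apply: uniq_perm.
- exact: undup_uniq.
- exact: Vlist_uniq.
- by move=> u; rewrite pverts_PC1.
Qed.

Lemma small1 : [/\ ZC1 (PC1 4) = 96, ZC1 (PC1 5) = 130, ZC1 (PC1 6) = 162,
   ZC1 (PC1 7) = 194 & ZC1 (PC1 8) = 226]%N /\ ZC1 (PC1 9) = 258%N.
Proof. by split; [split|]; rewrite ZC1_V // unlock; vm_compute. Qed.

Lemma small2 : [/\ ZC2 (PC1 5) = 181, ZC2 (PC1 6) = 230,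
   ZC2 (PC1 7) = 278, ZC2 (PC1 8) = 326 & ZC2 (PC1 9) = 374]%N.
Proof.
split; apply/eqP; rewrite -(eqn_pmul2l (isT : (0 < 2)%N)) ZC2_V // /gR unlock; by vm_compute.
Qed.
Definition Binf (p : point) : bool := ((p.1 == 1) && (p.2 == 0)) || ((p.1 == 0) && (0 <= p.2)).
Definition Bot (x : int) (j : nat) := fun c => Binf (padd (x, Posz j) c).
Definition Mid (x : int) := fun c : point => x + c.1 == 0.
Definition TopF (x : int) (i : nat) := fun c : point => (x + c.1 == 0) && (Posz i + c.2 <= 3).

Lemma restrict_bot n (x : int) j : (10 <= n)%N -> (j <= 4)%N ->
  restrict 4 (Tn n (x, Posz j)) = restrict 4 (Bot x j).
Proof.
move=> Hn Hj; apply: functional_extensionality => -[a b].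
rewrite /restrict /Tn /Bot /Binf /padd /=; case: ifP => // H.
rewrite mem_cells; last by lia.
apply/idP/idP; lia.
Qed.

Lemma restrict_mid n (x : int) j : (10 <= n)%N -> (5 <= j)%N -> (j + 6 <= n)%N ->
  restrict 4 (Tn n (x, Posz j)) = restrict 4 (Mid x).
Proof.
move=> Hn Hj Hj'; apply: functional_extensionality => -[a b].
rewrite /restrict /Tn /Mid /padd /=; case: ifP => // H.
rewrite mem_cells; last by lia.
apply/idP/idP; lia.
Qed.

Lemma restrict_top n (x : int) i : (10 <= n)%N -> (i < 5)%N ->
  restrict 4 (Tn n (x, Posz (n - 5 + i))) = restrict 4 (TopF x i).
Proof.
move=> Hn Hi; apply: functional_extensionality => -[a b].
rewrite /restrict /Tn /TopF /padd /=; case: ifP => // H.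
rewrite mem_cells; last by lia.
apply/idP/idP; lia.
Qed.

Lemma big_catN (T : Type) (s1 s2 : seq T) (F : T -> nat) :
  (\sum_(i <- s1 ++ s2) F i = \sum_(i <- s1) F i + \sum_(i <- s2) F i)%N.
Proof. exact: big_cat. Qed.

Lemma col_sum (G : (point -> bool) -> nat) (HG : forall T, G T = G (restrict 4 T)) n (x : int) :
  (10 <= n)%N ->
  (\sum_(j <- iota 0 n) G (Tn n (x, Posz j)) =
   \sum_(j <- iota 0 5) G (restrict 4 (Bot x j)) + (n - 10) * G (restrict 4 (Mid x))
   + \sum_(i <- iota 0 5) G (restrict 4 (TopF x i)))%N.
Proof.
move=> Hn.
have E : n = (5 + ((n - 10) + 5))%N by lia.
rewrite {1}E !iotaD !big_catN addnA add0n; congr (_ + _ + _)%N.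
- apply: eq_big_seq => j; rewrite mem_iota => Hj; rewrite HG restrict_bot //; lia.
- rewrite (eq_big_seq (fun _ => G (restrict 4 (Mid x)))); last first.
    move=> j; rewrite mem_iota => Hj; rewrite HG restrict_mid //; lia.
  by rewrite big_const_seq count_predT size_iota iter_addn_0 mulnC.
- rewrite -[(5 + (n - 10))%N]addn0 iotaDl big_map; apply: eq_big_seq => i; rewrite mem_iota => Hi.
  have -> : (5 + (n - 10) + i = n - 5 + i)%N by lia.
  rewrite HG restrict_top //; lia.
Qed.

Lemma col_sum1 n (x : int) : (10 <= n)%N ->
  (\sum_(j <- iota 0 n) tauR (Tn n (x, Posz j)) ^ 2 =
   \sum_(j <- iota 0 5) tauR (restrict 4 (Bot x j)) ^ 2 + (n - 10) * tauR (restrict 4 (Mid x)) ^ 2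
   + \sum_(i <- iota 0 5) tauR (restrict 4 (TopF x i)) ^ 2)%N.
Proof. apply: (@col_sum (fun T => tauR T ^ 2)%N) => T; by rewrite -tauR_restrict. Qed.

Lemma col_sum2 n (x : int) : (10 <= n)%N ->
  (\sum_(j <- iota 0 n) gR (Tn n (x, Posz j)) =
   \sum_(j <- iota 0 5) gR (restrict 4 (Bot x j)) + (n - 10) * gR (restrict 4 (Mid x))
   + \sum_(i <- iota 0 5) gR (restrict 4 (TopF x i)))%N.
Proof. apply: col_sum; exact: gR_restrict. Qed.

Theorem corollary1 :
  (forall n : nat, (4 <= n)%N ->
     ZC1 (PC1 n) = (32 * n - 30 - 2 * (n == 4))%N) /\
  (forall n : nat, (5 <= n)%N ->
     ZC2 (PC1 n) = (48 * n - 58 - (n == 5))%N).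
Proof.
split => n Hn.
- case: (ltnP n 10) => Hn10.
    have : (n = 4 \/ n = 5 \/ n = 6 \/ n = 7 \/ n = 8 \/ n = 9)%N by lia.
    case: small1 => [[h4 h5 h6 h7 h8] h9].
    by case=> [->|[->|[->|[->|[->|->]]]]].
  rewrite ZC1_V; last by lia.
  rewrite /Vlist !big_cons big_catN /col !big_map (col_sum1 0 Hn10) (col_sum1 1 Hn10).
  have -> : Tn n p20 = Tn n (2, Posz 0) by [].
  have -> : Tn n p21 = Tn n (2, Posz 1) by [].
  rewrite tauR_restrict (restrict_bot 2 Hn10 (isT : (0 <= 4)%N)) [tauR (Tn _ _)]tauR_restrict (restrict_bot 2 Hn10 (isT : (1 <= 4)%N)).
  have -> : (n == 4) = false by apply/eqP; lia.
  have K : (tauR (restrict 4 (Bot 2 0)) ^ 2 + tauR (restrict 4 (Bot 2 1)) ^ 2 = 13)%N by vm_compute.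
  have K0 : (\sum_(j <- iota 0 5) tauR (restrict 4 (Bot 0 j)) ^ 2 = 73)%N by rewrite unlock; vm_compute.
  have K1 : (\sum_(j <- iota 0 5) tauR (restrict 4 (Bot 1 j)) ^ 2 = 82)%N by rewrite unlock; vm_compute.
  have T0 : (\sum_(j <- iota 0 5) tauR (restrict 4 (TopF 0 j)) ^ 2 = 61)%N by rewrite unlock; vm_compute.
  have T1 : (\sum_(j <- iota 0 5) tauR (restrict 4 (TopF 1 j)) ^ 2 = 61)%N by rewrite unlock; vm_compute.
  have M0 : (tauR (restrict 4 (Mid 0)) ^ 2 = 16)%N by vm_compute.
  have M1 : (tauR (restrict 4 (Mid 1)) ^ 2 = 16)%N by vm_compute.
  rewrite K0 K1 T0 T1 ?M0 ?M1. move: K; lia.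
- case: (ltnP n 10) => Hn10.
    have : (n = 5 \/ n = 6 \/ n = 7 \/ n = 8 \/ n = 9)%N by lia.
    case: small2 => h5 h6 h7 h8 h9.
    by case=> [->|[->|[->|[->|->]]]].
  apply/eqP; rewrite -(eqn_pmul2l (isT : (0 < 2)%N)); apply/eqP.
  rewrite ZC2_V; last by lia.
  rewrite /Vlist !big_cons big_catN /col !big_map (col_sum2 0 Hn10) (col_sum2 1 Hn10).
  have -> : Tn n p20 = Tn n (2, Posz 0) by [].
  have -> : Tn n p21 = Tn n (2, Posz 1) by [].
  rewrite gR_restrict (restrict_bot 2 Hn10 (isT : (0 <= 4)%N)) [gR (Tn _ _)]gR_restrict (restrict_bot 2 Hn10 (isT : (1 <= 4)%N)).
  have -> : (n == 5) = false by apply/eqP; lia.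
  have K : (gR (restrict 4 (Bot 2 0)) + gR (restrict 4 (Bot 2 1)) = 30)%N by rewrite /gR unlock; vm_compute.
  have K0 : (\sum_(j <- iota 0 5) gR (restrict 4 (Bot 0 j)) = 213)%N by rewrite /gR unlock; vm_compute.
  have K1 : (\sum_(j <- iota 0 5) gR (restrict 4 (Bot 1 j)) = 247)%N by rewrite /gR unlock; vm_compute.
  have T0 : (\sum_(j <- iota 0 5) gR (restrict 4 (TopF 0 j)) = 177)%N by rewrite /gR unlock; vm_compute.
  have T1 : (\sum_(j <- iota 0 5) gR (restrict 4 (TopF 1 j)) = 177)%N by rewrite /gR unlock; vm_compute.
  have M0 : (gR (restrict 4 (Mid 0)) = 48)%N by rewrite /gR unlock; vm_compute.
  have M1 : (gR (restrict 4 (Mid 1)) = 48)%N by rewrite /gR unlock; vm_compute.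
  rewrite K0 K1 T0 T1 ?M0 ?M1. move: K; lia.
Qed.
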